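(* Let $V,s,c$ satisfy conditions (V), (S), (C) below, let $\mu_0\in\mathcal{M}^+(\mathbb{R}^d)$ with $\operatorname{supp}\mu_0\subseteq B(0,R_0)$, let $R$ be the radius in (S2), and set $\tilde R=\max\{R,R_0\}$. Let $\mu^N_t$ be the lattice approximate solution defined below. Then for all $N$ large enough, all $l=0,\dots,M$ and all $\tau\in[0,\Delta_N]$, $$\operatorname{supp}(\mu^N_{t_l+\tau})\subseteq B\bigl(0,e^{C_ST}(\tilde R+2)-1\bigr).$$ In particular, these measures are supported in a compact set independent of $N$, $l$ and $\tau$.
   Context: $\mathcal{M}^+(\mathbb{R}^k)$: finite nonnegative Borel measures; $\|f\|_{BL}=\max(\sup|f|,\operatorname{Lip}f)$, $\|\mu\|_{BL^*}=\sup\{\int\psi\,d\mu:\|\psi\|_{BL}\le1\}$. Conditions: (V) $V:\mathcal{M}^+(\mathbb{R}^d)\to\mathcal{M}^+(\mathbb{R}^d\times\mathbb{R}^d)$, $\pi_1^{\#}V[\mu]=\mu$; (V1) $\sup_{(x,v)\in\operatorname{supp}V[\mu]}|v|\le C_S(1+\sup_{(x,v)\in\operatorname{supp}V[\mu]}|x|)$; (V2) for each $R'>0$, $\|V[\mu]-V[\nu]\|_{BL^*}\le C_F(R')\|\mu-\nu\|_{BL^*}$ for $\mu,\nu$ supported in $B(0,R')$. (S) $s:\mathcal{M}^+(\mathbb{R}^d)\to\mathcal{M}^+(\mathbb{R}^d)$, (S1) $\|s[\mu]-s[\nu]\|_{BL^*}\le L\|\mu-\nu\|_{BL^*}$, (S2)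 $\operatorname{supp}s[\mu]\subseteq B(0,R)$ for all $\mu$. (C) $c:\mathbb{R}^d\times\mathcal{M}^+(\mathbb{R}^d)\to\mathbb{R}$, (C1) $|c|\le C_b$, (C2) $|c(x,\mu)-c(y,\nu)|\le C_L(|x-y|+\|\mu-\nu\|_{BL^*})$. Lattice scheme: fix $T>0$; for $N\in\mathbb{N}$, $\Delta_N=1/N$; $x_1,\dots,x_I$ enumerate $(N^{-2}\mathbb{Z}^d)\cap[-N,N]^d$, $v_1,\dots,v_J$ enumerate $(N^{-1}\mathbb{Z}^d)\cap[-N,N]^d$; $Q_i=x_i+[0,\Delta_N^2)^d$, $Q'_j=v_j+[0,\Delta_N)^d$; $m_i^x(\mu)=\mu(Q_i)$, $m_{ij}^v(W)=W(Q_i\times Q'_j)$. Time points $t_l=l/N$, $l=0,\dots,M$, with $M$ such that $[0,T]$ is covered by $[t_l,t_{l+1})$, $l<M$, and $[t_M,t_{M+1}]$, $t_{M+1}=T$, each of length at most $\Delta_N$. Set $\mu^N_0=\sum_i m_i^x(\mu_0)\delta_{x_i}$ and recursively, for $\tau\in[0,\Delta_N]$, $$\mu^N_{t_l+\tau}=\tau\sum_{i=1}^I m_i^x(s[\mu^N_{t_l}])\delta_{x_i}+\sum_{i=1}^I\sum_{j=1}^J m_{ij}^v(V[\mu^N_{t_l}])\,e^{c(x_i,\mu^N_{t_l})\tau}\,\delta_{x_i+\tau v_j}.$$ *)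

(* Defs.v *)
From HB Require Import structures.
From mathcomp Require Import all_boot all_order all_algebra.
From mathcomp Require Import all_classical all_reals all_analysis.
Set Implicit Arguments. Unset Strict Implicit. Unset Printing Implicit Defensive.
Import Order.TTheory GRing.Theory Num.Theory.
Local Open Scope classical_set_scope.
Local Open Scope ring_scope.

Definition Rd (R : realType) (d : nat) := 'rV[R]_d.
HB.instance Definition _ (R : realType) d := Choice.on (Rd R d).
HB.instance Definition _ (R : realType) d := isPointed.Build (Rd R d) (0%R : 'rV[R]_d).

Section Defs.
Variable R : realType.

Definition enorm (d : nat) (x : 'rV[R]_d) : R := Num.sqrt (\sum_(i < d) x ord0 i ^+ 2).

Definition eopen (d : nat) (A : set (Rd R d)) : Prop :=
  forall x, A x -> exists2 r : R, 0 < r & [set y | enorm ((y : 'rV[R]_d) - x) < r] `<=` A.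

Local Notation pt d := (g_sigma_algebraType (@eopen d)).

Definition vec (d : nat) (x : pt d) : 'rV[R]_d := x.
Definition ofvec (d : nat) (x : 'rV[R]_d) : pt d := x.

Definition dist1 (d : nat) (x y : pt d) : R := enorm (vec x - vec y).
Definition dist2 (d : nat) (p q : pt d * pt d) : R :=
  Num.sqrt (dist1 p.1 q.1 ^+ 2 + dist1 p.2 q.2 ^+ 2).

Definition Meas (d : nat) := {finite_measure set (pt d) -> \bar R}.
Definition Meas2 (d : nat) := {finite_measure set (pt d * pt d)%type -> \bar R}.

Definition supp (T : Type) (dist : T -> T -> R) (m : set T -> \bar R) : set T :=
  [set x | forall r : R, 0 < r -> (0 < m [set y | (dist x y < r)%R])%E].

Definition eball0 (d : nat) (r : R) : set (pt d) := [set x | enorm (vec x) < r].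

Definition BL1 (T : Type) (dist : T -> T -> R) (psi : T -> R) : Prop :=
  (forall x, `|psi x| <= 1) /\ (forall x y, `|psi x - psi y| <= dist x y).

Definition blnorm (dd : measure_display) (T : measurableType dd)
  (dist : T -> T -> R) (mu nu : set T -> \bar R) : \bar R :=
  ereal_sup [set (\int[mu]_x (psi x)%:E - \int[nu]_x (psi x)%:E)%E
            | psi in [set psi | BL1 dist psi]].

Definition bl1 (d : nat) (mu nu : Meas d) : \bar R := blnorm (@dist1 d) mu nu.
Definition bl2 (d : nat) (mu nu : Meas2 d) : \bar R := blnorm (@dist2 d) mu nu.

Definition condV (d : nat) (V : Meas d -> Meas2 d) (C_S : R) (C_F : R -> R) : Prop :=
  [/\ (forall mu (A : set (pt d)), measurable A -> V mu (A `*` setT) = mu A),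
      (forall mu, (ereal_sup [set (enorm (vec p.2))%:E | p in supp (@dist2 d) (V mu)]
                  <= C_S%:E * (1 + ereal_sup [set (enorm (vec p.1))%:E
                                             | p in supp (@dist2 d) (V mu)]))%E) &
      (forall R' : R, 0 < R' -> forall mu nu : Meas d,
         supp (@dist1 d) mu `<=` @eball0 d R' -> supp (@dist1 d) nu `<=` @eball0 d R' ->
         (bl2 (V mu) (V nu) <= (C_F R')%:E * bl1 mu nu)%E)].

Definition condS (d : nat) (s : Meas d -> Meas d) (L Rs : R) : Prop :=
  (forall mu nu : Meas d, (bl1 (s mu) (s nu) <= L%:E * bl1 mu nu)%E) /\
  (forall mu : Meas d, supp (@dist1 d) (s mu) `<=` @eball0 d Rs).

Definition condC (d : nat) (c : pt d -> Meas d -> R) (C_b C_L : R) : Prop :=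
  (forall x mu, `|c x mu| <= C_b) /\
  (forall x y mu nu, (`|c x mu - c y nu|%:E
                      <= C_L%:E * ((dist1 x y)%:E + bl1 mu nu))%E).

(** Lattice. Spatial nodes x_k = k / N^2 with k in Z^d, |k_j| <= N^3, i.e.
    (N^{-2} Z^d) cap [-N,N]^d; index k_j + N^3 in 'I_(2 N^3 + 1). *)
Definition xidx (N d : nat) := {ffun 'I_d -> 'I_(2 * N ^ 3 + 1)}.
Definition vidx (N d : nat) := {ffun 'I_d -> 'I_(2 * N ^ 2 + 1)}.

Definition xnode (N d : nat) (k : xidx N d) : 'rV[R]_d :=
  \row_j (((k j : nat)%:Z - (N ^ 3)%:Z)%:~R / (N%:R ^+ 2)).
Definition vnode (N d : nat) (k : vidx N d) : 'rV[R]_d :=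
  \row_j (((k j : nat)%:Z - (N ^ 2)%:Z)%:~R / N%:R).

Definition cube (d : nat) (a : 'rV[R]_d) (h : R) : set (pt d) :=
  [set y | forall j, a ord0 j <= vec y ord0 j < a ord0 j + h].
Definition Qx (N d : nat) (k : xidx N d) : set (pt d) := cube (xnode k) (N%:R ^+ 2)^-1.
Definition Qv (N d : nat) (k : vidx N d) : set (pt d) := cube (vnode k) (N%:R)^-1.

Definition discretize (N d : nat) (mu : Meas d) (A : set (pt d)) : \bar R :=
  (\sum_(i : xidx N d) mu (Qx i) * \d_(ofvec (xnode i)) A)%E.

(** One step of the scheme from mu = mu^N_{t_l}, evaluated at time t_l + tau. *)
Definition lattice_step (N d : nat) (V : Meas d -> Meas2 d) (s : Meas d -> Meas d)
  (c : pt d -> Meas d -> R) (mu : Meas d) (tau : R) (A : set (pt d)) : \bar R :=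
  (tau%:E * (\sum_(i : xidx N d) s mu (Qx i) * \d_(ofvec (xnode i)) A)
   + \sum_(i : xidx N d) \sum_(j : vidx N d)
       V mu (Qx i `*` Qv j) * (expR (c (ofvec (xnode i)) mu * tau))%:E
       * \d_(ofvec (xnode i + tau *: vnode j)) A)%E.

(** Number of full steps: M = floor(T N), so that t_M <= T < t_M + 1/N. *)
Definition Msteps (T : R) (N : nat) : nat := `|Num.floor (T * N%:R)|%N.

End Defs.

Notation pt R d := (g_sigma_algebraType (@eopen R d)).

(* Main.v *)
Require Import Defs.
From HB Require Import structures.
From mathcomp Require Import all_boot all_order all_algebra.
From mathcomp Require Import all_classical all_reals all_analysis.
From mathcomp Require Import ring lra.
Import Order.TTheory GRing.Theory Num.Theory.
Local Open Scope classical_set_scope.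
Local Open Scope ring_scope.
Set Implicit Arguments. Unset Strict Implicit. Unset Printing Implicit Defensive.

Section Enorm.
Variable R : realType.
Variable d : nat.
Implicit Types x y : 'rV[R]_d.

Definition sq x := \sum_(i < d) x ord0 i ^+ 2.
Definition dot x y := \sum_(i < d) x ord0 i * y ord0 i.

Lemma sq_ge0 x : 0 <= sq x.
Proof. by apply: sumr_ge0 => i _; rewrite sqr_ge0. Qed.

Lemma enormE x : enorm x = Num.sqrt (sq x).
Proof. by []. Qed.

Lemma enorm_ge0 x : 0 <= enorm x.
Proof. exact: sqrtr_ge0. Qed.

Lemma enorm_sqr x : enorm x ^+ 2 = sq x.
Proof. by rewrite enormE sqr_sqrtr // sq_ge0. Qed.

Lemma sqD x y : sq (x + y) = sq x + 2 * dot x y + sq y.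
Proof.
rewrite /sq /dot mulr_sumr -!big_split /=; apply: eq_bigr => i _.
rewrite !mxE; ring.
Qed.

Lemma dot_le x y : 2 * dot x y <= sq x + sq y.
Proof.
rewrite /sq /dot mulr_sumr -big_split /=; apply: ler_sum => i _.
have := sqr_ge0 (x ord0 i - y ord0 i); nra.
Qed.

Lemma dot_ge x y : - (sq x + sq y) <= 2 * dot x y.
Proof.
rewrite /sq /dot mulr_sumr -big_split /= -sumrN; apply: ler_sum => i _.
have := sqr_ge0 (x ord0 i + y ord0 i); nra.
Qed.

Lemma sq_lin x y (a b : R) :
  \sum_(i < d) (a * x ord0 i - b * y ord0 i) ^+ 2 = a ^+ 2 * sq x - 2 * a * b * dot x y + b ^+ 2 * sq y.
Proof.
rewrite /sq /dot !mulr_sumr -sumrB -big_split /=; apply: eq_bigr => i _; ring.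
Qed.

Lemma dotC x y : dot x y = dot y x.
Proof. by apply: eq_bigr => i _; rewrite mulrC. Qed.

Lemma CS x y : dot x y ^+ 2 <= sq x * sq y.
Proof.
set A := sq x; set B := sq y; set C := dot x y.
have h1 : 0 <= B ^+ 2 * A - 2 * B * C * C + C ^+ 2 * B.
  rewrite -sq_lin; by apply: sumr_ge0 => i _; rewrite sqr_ge0.
have h2 : 0 <= A ^+ 2 * B - 2 * A * C * C + C ^+ 2 * A.
  have := sq_lin y x A C; rewrite dotC -/A -/B -/C => <-.
  by apply: sumr_ge0 => i _; rewrite sqr_ge0.
have hA : 0 <= A := sq_ge0 x.
have hB : 0 <= B := sq_ge0 y.
have h3 := dot_le x y. have h4 := dot_ge x y.
rewrite -/A -/B -/C in h3 h4.
have [AB0|ABp] := eqVneq (A + B) 0.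
  have A0 : A = 0 by lra.
  have B0 : B = 0 by lra.
  have C0 : C = 0 by lra.
  by rewrite A0 B0 C0; lra.
have ABp' : 0 < A + B by rewrite lt_def ABp /=; lra.
nra.
Qed.

Lemma dot_le_enorm x y : dot x y <= enorm x * enorm y.
Proof.
have h := CS x y. rewrite -!enorm_sqr in h.
have hp := mulr_ge0 (enorm_ge0 x) (enorm_ge0 y).
rewrite -exprMn in h.
case: (lerP (dot x y) (enorm x * enorm y)) => // hlt.
have : (enorm x * enorm y) ^+ 2 < dot x y ^+ 2.
  by rewrite ltrXn2r.
by rewrite ltNge h.
Qed.

Lemma sq_le_enorm x (r : R) : 0 <= r -> sq x <= r ^+ 2 -> enorm x <= r.
Proof. move=> r0 h; rewrite enormE -(ger0_norm r0) -sqrtr_sqr ler_sqrt //; exact: sqr_ge0. Qed.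

Lemma sq_lt_enorm x (r : R) : 0 < r -> sq x < r ^+ 2 -> enorm x < r.
Proof.
move=> r0 h; rewrite enormE -(gtr0_norm r0) -sqrtr_sqr ltr_sqrt //.
by rewrite exprn_gt0.
Qed.

Lemma enormD x y : enorm (x + y) <= enorm x + enorm y.
Proof.
apply: sq_le_enorm; first by rewrite addr_ge0 // enorm_ge0.
rewrite sqD -!enorm_sqr; have := dot_le_enorm x y.
have -> : (enorm x + enorm y) ^+ 2 = enorm x ^+ 2 + 2 * (enorm x * enorm y) + enorm y ^+ 2 by ring.
lra.
Qed.

Lemma sqN x : sq (- x) = sq x.
Proof. by apply: eq_bigr => i _; rewrite mxE sqrrN. Qed.

Lemma enormN x : enorm (- x) = enorm x.
Proof. by rewrite !enormE sqN. Qed.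

Lemma enormB x y : enorm (x - y) = enorm (y - x).
Proof. by rewrite -enormN opprB. Qed.

Lemma enormZ (t : R) x : enorm (t *: x) = `|t| * enorm x.
Proof.
rewrite !enormE -sqrtr_sqr -sqrtrM ?sqr_ge0 //; congr Num.sqrt.
by rewrite /sq mulr_sumr; apply: eq_bigr => i _; rewrite mxE exprMn.
Qed.

Lemma coord_le x j : `|x ord0 j| <= enorm x.
Proof.
rewrite enormE -sqrtr_sqr ler_sqrt ?sq_ge0 // /sq (bigD1 j) //= lerDl.
by apply: sumr_ge0 => i _; rewrite sqr_ge0.
Qed.

Lemma enorm_box x (e : R) : 0 < e -> (forall j, `|x ord0 j| < e) -> enorm x < d.+1%:R * e.
Proof.
move=> e0 h; apply: sq_lt_enorm; first by rewrite mulr_gt0.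
apply: (@le_lt_trans _ _ (d%:R * e ^+ 2)).
  have <- : \sum_(i < d) e ^+ 2 = d%:R * e ^+ 2 by rewrite sumr_const card_ord mulr_natl.
  rewrite /sq; apply: ler_sum => i _.
  rewrite -real_normK ?num_real //; have := h i; have := normr_ge0 (x ord0 i); nra.
have : (0 <= d%:R :> R) by rewrite ler0n.
rewrite -natr1; nra.
Qed.

End Enorm.

Section Generic.
Variable R : realType.
Variables (dd : measure_display) (T : measurableType dd).
Variable dist : T -> T -> R.
Variable B : nat -> set T.
Hypothesis HBm : forall n, measurable (B n).
Hypothesis Hdens : forall p (r : R), 0 < r -> exists n, B n p /\ B n `<=` [set y | dist p y < r].
Hypothesis Hopen : forall p (r : R) q, dist p q < r ->
  exists2 r' : R, 0 < r' & [set y | dist q y < r'] `<=` [set y | dist p y < r].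

Lemma ball_meas p (r : R) : measurable [set y | dist p y < r].
Proof.
have -> : [set y | dist p y < r] = \bigcup_(n in [set n | B n `<=` [set y | dist p y < r]]) B n.
  apply/seteqP; split=> [q /= hq|q [n /= hn] /hn //].
  have [r' r'0 hr'] := Hopen hq.
  have [n [Bq Bsub]] := Hdens q r'0.
  by exists n => //; apply: subset_trans hr'.
exact: bigcup_measurable.
Qed.

Lemma supp_exists (m : {measure set T -> \bar R}) (C : set T) :
  measurable C -> (0 < m C)%E -> exists p, C p /\ supp dist m p.
Proof.
move=> mC mCpos; apply: contrapT => hno.
pose F n := [set y | B n y /\ m (B n) = 0%E].
have mF : forall n, measurable (F n).
  move=> n; have [h|h] := pselect (m (B n) = 0%E).
    by rewrite (_ : F n = B n) //; apply/seteqP; split=> [y []//|y /= ?]; split.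
  by rewrite (_ : F n = set0) //; apply/seteqP; split=> [y [] _ //|y //].
have F0 : forall n, m (F n) = 0%E.
  move=> n; have [h|h] := pselect (m (B n) = 0%E).
    by rewrite (_ : F n = B n) //; apply/seteqP; split=> [y []//|y /= ?]; split.
  by rewrite (_ : F n = set0) ?measure0 //; apply/seteqP; split=> [y [] _ //|y //].
have CF : C `<=` \bigcup_n F n.
  move=> p Cp.
  have : ~ supp dist m p by move=> sp; apply: hno; exists p.
  move=> /existsNP [r /not_implyP [r0 /negP]]; rewrite -leNgt => hr.
  have [n [Bnp Bsub]] := Hdens p r0.
  exists n => //; split => //; apply/eqP; rewrite eq_le measure_ge0 andbT.
  apply: le_trans hr; apply: le_measure => //; rewrite inE //; exact: ball_meas.
have := measure_sigma_subadditive m mF mC CF.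
rewrite eseries0; last by move=> i _ _; exact: F0.
by rewrite leNgt mCpos.
Qed.

End Generic.

Section Inst.
Variable R : realType.
Variable d : nat.
Local Notation P := (pt R d).

Lemma dist1_ge0 (x y : P) : 0 <= dist1 x y.
Proof. exact: enorm_ge0. Qed.

Lemma dist1_sym (x y : P) : dist1 x y = dist1 y x.
Proof. by rewrite /dist1 enormB. Qed.

Lemma dist1_tri (x y z : P) : dist1 x z <= dist1 x y + dist1 y z.
Proof.
rewrite /dist1 (_ : vec x - vec z = (vec x - vec y) + (vec y - vec z)); last by rewrite addrA subrK.
exact: enormD.
Qed.

Lemma ball1_open (c : P) (r : R) : eopen [set y : P | dist1 c y < r].
Proof.
move=> x /= hx; exists (r - dist1 c x); first by rewrite subr_gt0.
move=> y /= hy; have := dist1_tri c x y.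
rewrite (dist1_sym x y) /dist1 /vec; move: hy hx; rewrite /dist1 /vec; lra.
Qed.

Lemma ball1_meas (c : P) (r : R) : measurable [set y : P | dist1 c y < r].
Proof. have h := @ball1_open c r; rewrite /measurable /=; exact: sub_sigma_algebra. Qed.

Lemma rat_between (lo hi : R) : lo < hi -> exists q : rat, lo < ratr q < hi.
Proof. by move=> /rat_in_itvoo [q]; rewrite in_itv /=; exists q. Qed.

Lemma approx (x : 'rV[R]_d) (e : R) : 0 < e ->
  exists a : 'rV[rat]_d, enorm (map_mx ratr a - x) < e.
Proof.
move=> e0; set e' := e / d.+1%:R.
have e'0 : 0 < e' by rewrite divr_gt0.
have : forall j : 'I_d, exists q : rat, x ord0 j - e' < ratr q < x ord0 j + e'.
  move=> j; apply: rat_between; lra.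
move=> /choice [f hf]; exists (\row_j f j).
have -> : e = d.+1%:R * e' by rewrite /e' mulrC divfK // pnatr_eq0.
apply: enorm_box => // j; rewrite !mxE; have := hf j.
rewrite ltr_norml; lra.
Qed.

Definition B1 (n : nat) : set P :=
  if @unpickle ('rV[rat]_d * rat)%type n is Some (a, q)
  then [set y : P | dist1 (ofvec (map_mx ratr a)) y < ratr q] else set0.

Lemma B1_meas n : measurable (B1 n).
Proof. rewrite /B1; case: (unpickle n) => [[a q]|] //; exact: ball1_meas. Qed.

Lemma B1_dens (p : P) (r : R) : 0 < r -> exists n, B1 n p /\ B1 n `<=` [set y | dist1 p y < r].
Proof.
move=> r0; have [a ha] := approx (vec p) (divr_gt0 r0 (ltr0n _ 4)).
set a' : P := ofvec (map_mx ratr a).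
have ha' : dist1 a' p < r / 4 := ha.
have [q /andP [q1 q2]] : exists q : rat, r / 4 < ratr q < r / 2 by apply: rat_between; lra.
exists (pickle (a, q)); rewrite /B1 pickleK; split.
  rewrite /= -/a'; lra.
move=> y /= hy; have := dist1_tri p a' y.
rewrite (dist1_sym p a'); move: hy; rewrite -/a'; lra.
Qed.

Lemma B1_open (p : P) (r : R) q : dist1 p q < r ->
  exists2 r' : R, 0 < r' & [set y | dist1 q y < r'] `<=` [set y | dist1 p y < r].
Proof.
move=> h; exists (r - dist1 p q); first by rewrite subr_gt0.
move=> y /= hy; have := dist1_tri p q y; lra.
Qed.

Lemma supp1_exists (m : {measure set P -> \bar R}) (C : set P) :
  measurable C -> (0 < m C)%E -> exists p, C p /\ supp (@dist1 R d) m p.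
Proof. exact: (supp_exists (@B1_meas) (@B1_dens) (@B1_open)). Qed.

Lemma ball1_meas' (p : P) (r : R) : measurable [set y | dist1 p y < r].
Proof. exact: ball1_meas. Qed.

Lemma mink2 (a1 a2 b1 b2 c1 c2 : R) : 0 <= a1 -> 0 <= a2 -> 0 <= b1 -> 0 <= b2 ->
  0 <= c1 -> 0 <= c2 -> c1 <= a1 + b1 -> c2 <= a2 + b2 ->
  Num.sqrt (c1 ^+ 2 + c2 ^+ 2) <= Num.sqrt (a1 ^+ 2 + a2 ^+ 2) + Num.sqrt (b1 ^+ 2 + b2 ^+ 2).
Proof.
move=> ha1 ha2 hb1 hb2 hc1 hc2 h1 h2.
set U := Num.sqrt (a1 ^+ 2 + a2 ^+ 2); set V := Num.sqrt (b1 ^+ 2 + b2 ^+ 2).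
have U2 : U ^+ 2 = a1 ^+ 2 + a2 ^+ 2 by rewrite sqr_sqrtr // addr_ge0 // sqr_ge0.
have V2 : V ^+ 2 = b1 ^+ 2 + b2 ^+ 2 by rewrite sqr_sqrtr // addr_ge0 // sqr_ge0.
have U0 : 0 <= U := sqrtr_ge0 _. have V0 : 0 <= V := sqrtr_ge0 _.
have hUV : a1 * b1 + a2 * b2 <= U * V.
  have hp := mulr_ge0 U0 V0.
  case: (lerP (a1 * b1 + a2 * b2) (U * V)) => // hlt.
  have : (U * V) ^+ 2 < (a1 * b1 + a2 * b2) ^+ 2 by rewrite ltrXn2r.
  rewrite exprMn U2 V2; have := sqr_ge0 (a1 * b2 - a2 * b1).
  move=> H1 H2; exfalso; move: H1 H2; rewrite !expr2; nra.
rewrite -(ger0_norm (addr_ge0 U0 V0)) -sqrtr_sqr ler_sqrt ?sqr_ge0 //.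
have -> : (U + V) ^+ 2 = U ^+ 2 + 2 * (U * V) + V ^+ 2 by ring.
rewrite U2 V2; move: h1 h2 hUV; rewrite !expr2; nra.
Qed.

Local Notation P2 := (P * P)%type.

Lemma dist2_tri (x y z : P2) : dist2 x z <= dist2 x y + dist2 y z.
Proof.
apply: mink2; rewrite ?dist1_ge0 //; exact: dist1_tri.
Qed.

Lemma dist1_le_dist2 (x y : P2) : dist1 x.1 y.1 <= dist2 x y.
Proof.
have h : dist1 x.1 y.1 ^+ 2 <= dist1 x.1 y.1 ^+ 2 + dist1 x.2 y.2 ^+ 2 by rewrite lerDl sqr_ge0.
have h0 := le_trans (sqr_ge0 (dist1 x.1 y.1)) h.
rewrite -(ler_sqrt _ h0) sqrtr_sqr ger0_norm ?dist1_ge0 // in h.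
Qed.

Definition B2 (n : nat) : set P2 :=
  if @unpickle ('rV[rat]_d * 'rV[rat]_d * rat)%type n is Some (a, b, q)
  then [set y : P | dist1 (ofvec (map_mx ratr a)) y < ratr q] `*`
       [set y : P | dist1 (ofvec (map_mx ratr b)) y < ratr q] else set0.

Lemma B2_meas n : measurable (B2 n).
Proof.
rewrite /B2; case: (unpickle n) => [[[a b] q]|] //.
apply: measurableX; exact: ball1_meas.
Qed.

Lemma B2_dens (p : P2) (r : R) : 0 < r -> exists n, B2 n p /\ B2 n `<=` [set y | dist2 p y < r].
Proof.
move=> r0; have [a ha] := approx (vec p.1) (divr_gt0 r0 (ltr0n _ 4)).
have [b hb] := approx (vec p.2) (divr_gt0 r0 (ltr0n _ 4)).
set a' : P := ofvec (map_mx ratr a).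
set b' : P := ofvec (map_mx ratr b).
have ha' : dist1 a' p.1 < r / 4 := ha.
have hb' : dist1 b' p.2 < r / 4 := hb.
have [q /andP [q1 q2]] : exists q : rat, r / 4 < ratr q < r / 3 by apply: rat_between; lra.
exists (pickle (a, b, q)); rewrite /B2 pickleK; split.
  by split; rewrite /= ?/a' ?/b' /=; lra.
move=> [y1 y2] [/= hy1 hy2].
rewrite -/a' in hy1; rewrite -/b' in hy2.
have t1 := dist1_tri p.1 a' y1.
have t2 := dist1_tri p.2 b' y2.
rewrite (dist1_sym p.1 a') in t1.
rewrite (dist1_sym p.2 b') in t2.
have c1 : dist1 p.1 y1 < 7 * r / 12 by lra.
have c2 : dist1 p.2 y2 < 7 * r / 12 by lra.
rewrite /dist2 /= -(gtr0_norm r0) -sqrtr_sqr ltr_sqrt ?exprn_gt0 //.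
have := dist1_ge0 p.1 y1; have := dist1_ge0 p.2 y2.
move: c1 c2; rewrite !expr2; nra.
Qed.

Lemma B2_open (p : P2) (r : R) q : dist2 p q < r ->
  exists2 r' : R, 0 < r' & [set y | dist2 q y < r'] `<=` [set y | dist2 p y < r].
Proof.
move=> h; exists (r - dist2 p q); first by rewrite subr_gt0.
move=> y /= hy; have := dist2_tri p q y; lra.
Qed.

Lemma supp2_exists (m : {measure set P2 -> \bar R}) (C : set P2) :
  measurable C -> (0 < m C)%E -> exists p, C p /\ supp (@dist2 R d) m p.
Proof. exact: (supp_exists (@B2_meas) (@B2_dens) (@B2_open)). Qed.

Lemma ball2_meas (p : P2) (r : R) : measurable [set y | dist2 p y < r].
Proof. exact: (ball_meas (@B2_meas) (@B2_dens) (@B2_open)). Qed.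

End Inst.

Lemma sum_pos (R : realType) (I : finType) (F : I -> \bar R) :
  (0 < \sum_(i : I) F i)%E -> exists i, (0 < F i)%E.
Proof.
move=> h; apply: contrapT => hn.
have : (\sum_(i : I) F i <= 0)%E.
  apply: sume_le0 => i _; rewrite leNgt; apply/negP => hi; apply: hn; by exists i.
by rewrite leNgt h.
Qed.

Lemma dirac_pos (R : realType) (dd : measure_display) (T : measurableType dd)
  (a : \bar R) (p : T) (A : set T) :
  (0 < a * \d_p A)%E -> (0 < a)%E /\ A p.
Proof.
rewrite diracE; case: (boolP (p \in A)) => [pA|pA] /=.
  by rewrite mule1 => h; split => //; exact: set_mem.
by rewrite mule0 ltxx.
Qed.

Section Atoms.
Variable R : realType.
Variables (N d : nat).
Local Notation P := (pt R d).
Variables (V : Meas R d -> Meas2 R d) (s : Meas R d -> Meas R d) (c : P -> Meas R d -> R).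

Lemma step_atoms (mu : Meas R d) (tau : R) (x : P) : 0 <= tau ->
  supp (@dist1 R d) (lattice_step N V s c mu tau) x ->
  forall r : R, 0 < r ->
  (exists i : xidx N d, (0 < s mu (Qx i))%E /\ dist1 x (ofvec (xnode R i)) < r) \/
  (exists (i : xidx N d) (j : vidx N d), (0 < V mu (Qx i `*` Qv j))%E /\ dist1 x (ofvec (xnode R i + tau *: vnode R j)) < r).
Proof.
move=> tau0 hx r r0; have := hx r r0; rewrite /lattice_step.
set S1 := (\sum_(i : xidx N d) _)%E.
set S2 := (\sum_(i : xidx N d) _)%E.
have S1ge0 : (0 <= S1)%E.
  apply: sume_ge0 => i _; apply: mule_ge0; [exact: measure_ge0|exact: measure_ge0].
have S2ge0 : (0 <= S2)%E.
  apply: sume_ge0 => i _; apply: sume_ge0 => j _; apply: mule_ge0; last exact: measure_ge0.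
  by apply: mule_ge0; [exact: measure_ge0|rewrite lee_fin expR_ge0].
have [h1|h1] := boolP (0 < S1)%E.
  move=> _; left; have [i hi] := sum_pos h1.
  have [hs hA] := dirac_pos hi; by exists i.
have S10 : S1 = 0%E by apply/eqP; rewrite eq_le S1ge0 andbT leNgt.
rewrite S10 mule0 add0e => h2; right.
have [i hi] := sum_pos h2; have [j hj] := sum_pos hi.
have [hs hA] := dirac_pos hj.
exists i, j; split => //.
have [h0|hn] := eqVneq (V mu (Qx i `*` Qv j)) 0%E.
  by move: hs; rewrite h0 mul0e ltxx.
by rewrite lt_def hn measure_ge0.
Qed.

Lemma disc_atoms (mu : Meas R d) (x : P) :
  supp (@dist1 R d) (discretize N mu) x ->
  forall r : R, 0 < r ->
  exists i : xidx N d, (0 < mu (Qx i))%E /\ dist1 x (ofvec (xnode R i)) < r.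
Proof.
move=> hx r r0; have := hx r r0; rewrite /discretize => h.
have [i hi] := sum_pos h; have [hs hA] := dirac_pos hi; by exists i.
Qed.

End Atoms.

Section Cube.
Variable R : realType.
Variable d : nat.
Local Notation P := (pt R d).

Lemma cube_near (a : 'rV[R]_d) (e : R) (y : P) : 0 < e -> cube a e y ->
  enorm (vec y - a) < d.+1%:R * e.
Proof.
move=> e0 hy; apply: enorm_box => // j; rewrite !mxE.
have := hy j; move=> /andP[h1 h2]; rewrite ger0_norm; lra.
Qed.

Lemma halfspace_meas (j : 'I_d) (b : R) : measurable [set y : P | vec y ord0 j < b].
Proof.
have h : eopen [set y : P | vec y ord0 j < b].
  move=> x /= hx; exists (b - vec x ord0 j); first by rewrite subr_gt0.
  move=> y /= hy; have := coord_le (y - x) j; rewrite !mxE.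
  move: hy; rewrite /vec => hy h1; have := ler_norm (y ord0 j - x ord0 j); lra.
rewrite /measurable /=; exact: sub_sigma_algebra.
Qed.

Lemma slab_meas (j : 'I_d) (a e : R) :
  measurable [set y : P | a <= vec y ord0 j < a + e].
Proof.
have -> : [set y : P | a <= vec y ord0 j < a + e] =
  ~` [set y : P | vec y ord0 j < a] `&` [set y : P | vec y ord0 j < a + e].
  apply/seteqP; split => y /=.
    by move=> /andP [h1 h2]; split => //; apply/negP; rewrite -leNgt.
  by move=> [h1 h2]; apply/andP; split => //; rewrite leNgt; apply/negP.
apply: measurableI; [apply: measurableC|]; exact: halfspace_meas.
Qed.

Lemma cube_meas (a : 'rV[R]_d) (e : R) : measurable (cube a e).
Proof.
pose F n := [set y : P | forall j : 'I_d, (j : nat) = n -> a ord0 j <= vec y ord0 j < a ord0 j + e].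
have -> : cube a e = \bigcap_n F n.
  apply/seteqP; split => y /=.
    by move=> hy n _ j _; exact: hy.
  by move=> hy j; exact: (hy j).
apply: bigcapT_measurable => n.
have [nd|nd] := ltnP n d.
  have -> : F n = [set y : P | a ord0 (Ordinal nd) <= vec y ord0 (Ordinal nd) < a ord0 (Ordinal nd) + e].
    apply/seteqP; split => y /=.
      by move=> hy; exact: hy.
    by move=> hy j jn; have -> : j = Ordinal nd by apply: val_inj.
  exact: slab_meas.
have -> : F n = setT.
  apply/seteqP; split => y //= _ j jn; exfalso; have := ltn_ord j; by rewrite jn ltnNge nd.
exact: measurableT.
Qed.

End Cube.

Section VLemmas.
Variable R : realType.
Variable d : nat.
Local Notation P := (pt R d).
Variables (V : Meas R d -> Meas2 R d) (C_S : R) (C_F : R -> R).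
Hypothesis hV : condV V C_S C_F.

Lemma supp_marg (mu : Meas R d) (q : P * P) :
  supp (@dist2 R d) (V mu) q -> supp (@dist1 R d) mu q.1.
Proof.
move=> hq r r0; have := hq r r0; have [hmarg _ _] := hV.
rewrite -hmarg; last exact: ball1_meas.
move=> h; apply: lt_le_trans h _; apply: le_measure; rewrite ?inE.
- exact: ball2_meas.
- apply: measurableX; [exact: ball1_meas| exact: measurableT].
- move=> y /= hy; split => //; have := dist1_le_dist2 q y; lra.
Qed.

Lemma V1_bound (mu : Meas R d) (Bd : R) (q : P * P) :
  (forall p, supp (@dist1 R d) mu p -> 1 + enorm (vec p) <= Bd) ->
  supp (@dist2 R d) (V mu) q -> 0 <= C_S /\ enorm (vec q.2) <= C_S * Bd.
Proof.
move=> hmu hq; have [_ hV1 _] := hV; have h := hV1 mu.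
set S1 := ereal_sup _ in h. set S := ereal_sup _ in h.
have hS1 : ((enorm (vec q.2))%:E <= S1)%E by apply: ereal_sup_ubound; exists q.
have hSl : ((enorm (vec q.1))%:E <= S)%E by apply: ereal_sup_ubound; exists q.
have hSu : (S <= (Bd - 1)%:E)%E.
  apply: ge_ereal_sup => z [p hp <-]; rewrite lee_fin.
  have := hmu _ (supp_marg hp); lra.
clearbody S S1.
have e1 := enorm_ge0 (vec q.1). have e2 := enorm_ge0 (vec q.2).
case: S hSl hSu h => [σ| |] //= hSl hSu h.
rewrite lee_fin in hSl; rewrite lee_fin in hSu.
have := le_trans hS1 h; rewrite -EFinD -EFinM lee_fin => hh.
have CS0 : 0 <= C_S by nra.
split => //; nra.
Qed.

Lemma CS_pos (mu : Meas R d) (A : set P) : measurable A -> (0 < mu A)%E -> 0 <= C_S.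
Proof.
move=> mA hA; have [hmarg hV1 _] := hV.
rewrite -hmarg // in hA.
have [q [_ hq]] := supp2_exists (measurableX mA measurableT) hA.
have h := hV1 mu.
set S1 := ereal_sup _ in h. set S := ereal_sup _ in h.
have hS1 : ((enorm (vec q.2))%:E <= S1)%E by apply: ereal_sup_ubound; exists q.
have hSl : ((enorm (vec q.1))%:E <= S)%E by apply: ereal_sup_ubound; exists q.
clearbody S S1.
have e1 := enorm_ge0 (vec q.1). have e2 := enorm_ge0 (vec q.2).
case: (lerP 0 C_S) => // hneg; exfalso.
case: S hSl h => [σ| |] //= hSl h.
  rewrite lee_fin in hSl.
  have := le_trans hS1 h => hh; rewrite -EFinD -EFinM lee_fin in hh; clear -hh hSl e1 e2 hneg; nra.
have := le_trans hS1 h; rewrite addey // mulry ltr0_sg // mulN1e. by rewrite leeNy_eq.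
Qed.

End VLemmas.

Section Step.
Variable R : realType.
Variables (N d : nat).
Local Notation P := (pt R d).
Variables (V : Meas R d -> Meas2 R d) (s : Meas R d -> Meas R d) (c : P -> Meas R d -> R).
Variables (C_S : R) (C_F : R -> R) (L Rs Rt : R).
Hypothesis hV : condV V C_S C_F.
Hypothesis hS : condS s L Rs.
Hypothesis hRt : Rs <= Rt.
Hypothesis N0 : (0 < N)%N.
Local Notation Dd := (d.+1%:R : R).
Local Notation h := (N%:R^-1 : R).

Lemma h_gt0 : 0 < h.
Proof. by rewrite invr_gt0 ltr0n. Qed.

Lemma enorm_shift (a : 'rV[R]_d) (y : P) :
  enorm a <= enorm (vec y) + enorm (vec y - a).
Proof.
have := enormD (vec y) (- (vec y - a)).
by rewrite enormN opprB addrCA subrr addr0.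
Qed.

Lemma xnode_bound (i : xidx N d) (p : P) : Qx i p ->
  enorm (xnode R i) <= enorm (vec p) + Dd * h ^+ 2.
Proof.
move=> hp; have := @cube_near R d (xnode R i) _ p _ hp.
rewrite exprVn invr_gt0 exprn_gt0 ?ltr0n // => /(_ isT) hc.
have := enorm_shift (xnode R i) p; lra.
Qed.

Lemma vnode_bound (j : vidx N d) (p : P) : Qv j p ->
  enorm (vnode R j) <= enorm (vec p) + Dd * h.
Proof.
move=> hp; have := @cube_near R d (vnode R j) _ p _ hp.
rewrite invr_gt0 ltr0n => /(_ N0) hc.
have := enorm_shift (vnode R j) p; lra.
Qed.

Lemma step_bound (mu : Meas R d) (Bd Bn tau : R) :
  0 <= tau -> tau <= h ->
  (forall p, supp (@dist1 R d) mu p -> [/\ 0 <= C_S, 0 <= Rt & 1 + enorm (vec p) <= Bd]) ->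
  (0 <= C_S -> 0 <= Rt -> 1 + Rt + Dd * h ^+ 2 <= Bn) ->
  (0 <= C_S -> 0 <= Rt -> 1 <= Bd -> Bd + tau * (C_S * Bd) + 2 * Dd * h ^+ 2 <= Bn) ->
  forall x, supp (@dist1 R d) (lattice_step N V s c mu tau) x ->
  [/\ 0 <= C_S, 0 <= Rt & 1 + enorm (vec x) <= Bn].
Proof.
move=> t0 th hmu hB1 hB2 x hx.
have h0 := h_gt0.
have key : forall r, 0 < r -> exists p : P,
    dist1 x p < r /\ [/\ 0 <= C_S, 0 <= Rt & 1 + enorm (vec p) <= Bn].
  move=> r r0; case: (step_atoms t0 hx r0) => [[i [hi hd]]|[i [j [hij hd]]]].
  - have CS0 := CS_pos hV (cube_meas _ _) hi.
    have [p' [Qp' sp']] := supp1_exists (cube_meas _ _) hi.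
    have hp' : enorm (vec p') < Rs := hS.2 mu p' sp'.
    have hxb : enorm (xnode R i) <= enorm (vec p') + Dd * h ^+ 2 := xnode_bound Qp'.
    have e0 : 0 <= enorm (vec p') := enorm_ge0 _.
    exists (ofvec (xnode R i)); split => //.
    have Rt0 : 0 <= Rt. have t := le_lt_trans e0 hp'. have t2 := ltW t. have t3 := le_trans t2 hRt. exact t3.
    split => //; have hb1 : 1 + Rt + Dd * h ^+ 2 <= Bn := hB1 CS0 Rt0.
    rewrite /ofvec /vec. move: hxb hb1; move: (Dd * h ^+ 2) => E. move: hp' hRt. lra.
  - have [q [[Qq1 Qq2] sq]] := supp2_exists (measurableX (cube_meas _ _) (cube_meas _ _)) hij.
    have sq1 := supp_marg hV sq.
    have [CS0 Rt0 hq1] := hmu _ sq1.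
    have [_ hq2] := V1_bound hV (Bd:=Bd) (fun p hp => let: And3 _ _ h := hmu p hp in h) sq.
    exists (ofvec (xnode R i + tau *: vnode R j)); split => //; split => //.
    have hxn := xnode_bound Qq1.
    have hvn := vnode_bound Qq2.
    have e1 := enorm_ge0 (vec q.1).
    have := enormD (xnode R i) (tau *: vnode R j).
    rewrite enormZ ger0_norm // => hD.
    have Bd1 : 1 <= Bd by lra.
    have := hB2 CS0 Rt0 Bd1.
    have t1 : tau * enorm (vnode R j) <= tau * (C_S * Bd + Dd * h).
      by apply: ler_wpM2l => //; lra.
    have t2 : tau * (Dd * h) <= h * (Dd * h).
      by apply: ler_wpM2r => //; rewrite mulr_ge0 // ltW.
    rewrite /ofvec /vec; move: hD; rewrite /vec; nra.
have [p1 [_ [CS0 Rt0 _]]] := key 1 ltr01.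
split => //.
apply/ler_addgt0Pr => e e0; have [p [hd [_ _ hp]]] := key e e0.
have := enorm_shift (vec x) p.
rewrite enormB; move: hd; rewrite /dist1 /vec; lra.
Qed.

End Step.

Lemma Msteps_le (R : realType) (T : R) (N : nat) : 0 <= T -> (Msteps T N)%:R <= T * N%:R.
Proof.
move=> T0; rewrite /Msteps natr_absz ger0_norm; first exact: floor_le.
by rewrite floor_ge0 mulr_ge0.
Qed.

Lemma supp_transfer (R : realType) (d : nat) (m1 m2 : set (pt R d) -> \bar R) :
  (forall A, measurable A -> m1 A = m2 A) ->
  supp (@dist1 R d) m1 `<=` supp (@dist1 R d) m2.
Proof. by move=> h x hx r r0; rewrite -h; [exact: hx|exact: ball1_meas]. Qed.

Lemma disc_bound (R : realType) (N d : nat) (V : Meas R d -> Meas2 R d) (C_S : R) (C_F : R -> R)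
   (mu0 : Meas R d) (R0 Rt : R) :
  condV V C_S C_F -> (0 < N)%N -> R0 <= Rt ->
  supp (@dist1 R d) mu0 `<=` @eball0 R d R0 ->
  forall x, supp (@dist1 R d) (discretize N mu0) x ->
  [/\ 0 <= C_S, 0 <= Rt & 1 + enorm (vec x) <= 1 + Rt + d.+1%:R * (N%:R^-1) ^+ 2].
Proof.
move=> hV N0 hRt hmu0 x hx.
have key : forall r : R, 0 < r -> exists p : pt R d,
    dist1 x p < r /\ [/\ 0 <= C_S, 0 <= Rt & 1 + enorm (vec p) <= 1 + Rt + d.+1%:R * (N%:R^-1) ^+ 2].
  move=> r r0; have [i [hi hd]] := disc_atoms hx r0.
  have CS0 := CS_pos hV (cube_meas _ _) hi.
  have [p' [Qp' sp']] := supp1_exists (cube_meas _ _) hi.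
  have hp' : enorm (vec p') < R0 := hmu0 p' sp'.
  have hxb : enorm (xnode R i) <= enorm (vec p') + d.+1%:R * (N%:R^-1) ^+ 2 := xnode_bound N0 Qp'.
  have e0 : 0 <= enorm (vec p') := enorm_ge0 _.
  exists (ofvec (xnode R i)); split => //.
  have Rt0 : 0 <= Rt by move: e0 hp' hRt; lra.
  split => //; rewrite /ofvec /vec; move: hxb; move: (d.+1%:R * _) => E; move: hp' hRt; lra.
have [p1 [_ [CS0 Rt0 _]]] := key 1 ltr01.
split => //.
apply/ler_addgt0Pr => e e0; have [p [hd [_ _ hp]]] := key e e0.
have := enorm_shift (vec x) p.
rewrite enormB; move: hd hp; rewrite /dist1 /vec; lra.
Qed.

Unset Implicit Arguments. Set Strict Implicit.

Theorem lemma4p3 (R : realType) (d : nat) (T : R)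
  (V : Meas R d -> Meas2 R d) (s : Meas R d -> Meas R d)
  (c : pt R d -> Meas R d -> R)
  (C_S : R) (C_F : R -> R) (L Rs C_b C_L : R)
  (mu0 : Meas R d) (R0 : R) :
  0 < T ->
  condV V C_S C_F ->
  condS s L Rs ->
  condC c C_b C_L ->
  supp (@dist1 R d) mu0 `<=` @eball0 R d R0 ->
  exists N0 : nat, forall N : nat, (N0 <= N)%N ->
    forall nu : nat -> Meas R d,
      (forall A : set (pt R d), measurable A -> nu 0%N A = discretize N mu0 A) ->
      (forall (l : nat) (A : set (pt R d)), (l < Msteps T N)%N -> measurable A ->
         nu l.+1 A = lattice_step N V s c (nu l) (N%:R)^-1 A) ->
      forall l : nat, (l <= Msteps T N)%N ->
      forall tau : R, 0 <= tau <= (N%:R)^-1 ->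
        supp (@dist1 R d) (lattice_step N V s c (nu l) tau)
          `<=` @eball0 R d (expR (C_S * T) * (Num.max Rs R0 + 2) - 1).
Proof.
move=> T0 hV hS hC hmu0.
set Rt := Num.max Rs R0.
have hRs : Rs <= Rt by rewrite le_max lexx.
have hR0 : R0 <= Rt by rewrite le_max lexx orbT.
set Dd : R := d.+1%:R.
have Dd0 : 0 < Dd by rewrite ltr0n.
set K : R := 1 + 2 * `|C_S| + 12 * Dd * (T + 2) + 8 * `|C_S| * (2 + `|Rt|).
have K1 : 1 <= K.
  have := normr_ge0 C_S; have := normr_ge0 Rt; rewrite /K; nra.
exists (Num.bound K) => N hN nu hnu0 hnuS l hl tau /andP [t0 th].
have KN : K < N%:R.
  apply: lt_le_trans (archi_boundP _) _; first by lra.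
  by rewrite ler_nat.
have N0 : (0 < N)%N by rewrite -(ltr0n R); lra.
set h : R := N%:R^-1.
have h0 : 0 < h by rewrite invr_gt0 ltr0n.
have Kh : K * h < 1 by rewrite /h mulrC ltr_pdivrMl ?ltr0n // mulr1.
have h1 : h <= 1 by nra.
set M := Msteps T N.
have hM : forall l, (l <= M)%N -> h * l%:R <= T.
  move=> k hk; have := Msteps_le N (ltW T0); rewrite -/M => hMT.
  have : (k%:R : R) <= M%:R by rewrite ler_nat.
  move=> hk'; have : h * k%:R <= h * (T * N%:R) by apply: ler_wpM2l; [lra|lra].
  by rewrite mulrCA /h mulVf ?pnatr_eq0 -?lt0n // mulr1.
pose B (k : nat) := (1 + Rt + 3 * Dd * h ^+ 2 * k.+1%:R) * expR (C_S * (h * k%:R)).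
have Bstep : forall k tau', 0 <= tau' -> tau' <= h -> 0 <= C_S -> 0 <= Rt -> 1 <= B k ->
    B k + tau' * (C_S * B k) + 2 * Dd * h ^+ 2 <= B k.+1.
  move=> k tau' ht0 ht1 CS0 Rt0 B1.
  set Q := 1 + Rt + 3 * Dd * h ^+ 2 * k.+1%:R.
  have Q0 : 0 <= Q by rewrite /Q; have : (0 : R) <= k.+1%:R by []; have := mulr_ge0 (ltW Dd0) (sqr_ge0 h); nra.
  set X := expR (C_S * (h * k%:R)).
  set Y := expR (C_S * h).
  have XY : expR (C_S * (h * k.+1%:R)) = X * Y.
    by rewrite /X /Y -expRD -natr1; congr expR; ring.
  have X1 : 1 <= X by rewrite /X; have := expR_ge1Dx (C_S * (h * k%:R)); have := mulr_ge0 CS0 (mulr_ge0 (ltW h0) (ler0n R k)); lra.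
  have Y1 : 1 + C_S * h <= Y := expR_ge1Dx _.
  have CSh : 0 <= C_S * h by rewrite mulr_ge0 // ltW.
  rewrite /B XY -/Q -/X.
  have -> : (1 + Rt + 3 * Dd * h ^+ 2 * k.+2%:R) = Q + 3 * Dd * h ^+ 2.
    by rewrite /Q -[k.+2%:R]natr1; ring.
  have QX0 : 0 <= Q * X by rewrite mulr_ge0 //; lra.
  have e1 : Q * X * (1 + C_S * h) <= Q * X * Y by apply: ler_wpM2l.
  have e2 : tau' * (C_S * (Q * X)) <= h * (C_S * (Q * X)) by apply: ler_wpM2r => //; rewrite mulr_ge0.
  have Y1' : 1 <= Y by move: Y1 CSh; lra.
  have XY1 : 1 <= X * Y by move: X1 Y1'; nra.
  have DH : 0 <= Dd * h ^+ 2 by rewrite mulr_ge0 ?sqr_ge0 // ltW.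
  have e3 : 2 * Dd * h ^+ 2 <= 3 * Dd * h ^+ 2 * (X * Y) by nra.
  nra.
have hB1gen : forall k, 0 <= C_S -> 0 <= Rt -> 1 + Rt + Dd * h ^+ 2 <= B k.+1.
  move=> k CS0 Rt0; rewrite /B.
have E1 : 1 <= expR (C_S * (h * k.+1%:R)).
    have := expR_ge1Dx (C_S * (h * k.+1%:R)); have := mulr_ge0 CS0 (mulr_ge0 (ltW h0) (ler0n R k.+1)); lra.
  have H2 : 0 <= 3 * Dd * h ^+ 2 * k.+2%:R - Dd * h ^+ 2.
    have : (1 : R) <= k.+2%:R by rewrite ler1n.
    have := mulr_ge0 (ltW Dd0) (sqr_ge0 h); nra.
  have DH : 0 <= Dd * h ^+ 2 by rewrite mulr_ge0 ?sqr_ge0 // ltW.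
  have Q0 : 0 <= 1 + Rt + 3 * Dd * h ^+ 2 * k.+2%:R by move: H2 DH Rt0; lra.
  have := ler_wpM2l Q0 E1; rewrite mulr1.
  move: H2 DH Rt0; lra.
have claim : forall k, (k <= M)%N -> forall p, supp (@dist1 R d) (nu k) p ->
    [/\ 0 <= C_S, 0 <= Rt & 1 + enorm (vec p) <= B k].
  elim=> [|k IH] hk p hp.
    have [CS0 Rt0 hb] := disc_bound hV N0 hR0 hmu0 (supp_transfer hnu0 hp).
    split => //; rewrite /B mulr0 mulr0 expR0 mulr1.
    move: hb; rewrite -/h -/Dd; have := mulr_ge0 (ltW Dd0) (sqr_ge0 h); lra.
  have hlt : (k < M)%N by [].
  have hp' := supp_transfer (fun A mA => hnuS k A hlt mA) hp.
  apply: (step_bound hV hS hRs N0 _ _ (IH (ltnW hlt)) _ _ hp') => //.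
  - exact: hB1gen.
  - by move=> CS0 Rt0 B1; apply: Bstep.
move=> x hx.
have [CS0 Rt0 hb] := step_bound hV hS hRs N0 t0 th (claim l hl) (hB1gen l)
  (fun CS0 Rt0 B1 => Bstep l tau t0 th CS0 Rt0 B1) hx.
have hl1 : h * l%:R <= T := hM l hl.
set E := expR (C_S * T).
set Y := expR (C_S * h).
have E0 : 0 < E := expR_gt0 _.
have CSh : 0 <= C_S * h by rewrite mulr_ge0 // ltW.
have hX : expR (C_S * (h * l.+1%:R)) <= E * Y.
  rewrite /E /Y -expRD ler_expR -natr1 mulrDr mulr1 mulrDr lerD2r.
  by apply: ler_wpM2l.
have nCS : `|C_S| = C_S by rewrite ger0_norm.
have nRt : `|Rt| = Rt by rewrite ger0_norm.
have DH0 : 0 <= Dd * h by rewrite mulr_ge0 // ltW.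
have KH : K * h = h + 2 * (C_S * h) + 12 * (Dd * h) * (T + 2) + 8 * (C_S * h) * (2 + Rt).
  by rewrite /K nCS nRt; ring.
have hx1 : 2 * (C_S * h) <= K * h.
  rewrite KH; have := mulr_ge0 DH0 (ltW (ltr_wpDr (ler0n R 2) T0)).
  have := mulr_ge0 CSh (addr_ge0 (ler0n R 2) Rt0); move: h0; lra.
have hx2 : 12 * (Dd * h) * (T + 2) <= K * h.
  rewrite KH; have := mulr_ge0 CSh (addr_ge0 (ler0n R 2) Rt0); move: h0 CSh; lra.
have hx3 : 8 * (C_S * h) * (2 + Rt) <= K * h.
  rewrite KH; have := mulr_ge0 DH0 (ltW (ltr_wpDr (ler0n R 2) T0)); move: h0 CSh; lra.
have hY : Y <= 1 + 2 * (C_S * h).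
  have Yinv : Y * expR (- (C_S * h)) = 1 by rewrite expRN /Y mulfV // gt_eqF // expR_gt0.
  have Ym := expR_ge1Dx (- (C_S * h)).
  have Y0 : 0 < Y := expR_gt0 _.
  have := ler_wpM2l (ltW Y0) Ym; rewrite Yinv => hh.
  move: hh Kh hx1 CSh Y0; set x0 := C_S * h; move: (K * h) => kh; nra.
have hQ : 3 * Dd * h ^+ 2 * l.+2%:R <= 3 * (Dd * h) * (T + 2).
  have -> : 3 * Dd * h ^+ 2 * l.+2%:R = 3 * (Dd * h) * (h * l%:R + 2 * h).
    by rewrite -[l.+2%:R]natr1 -[l.+1%:R]natr1; ring.
  apply: ler_wpM2l; first by rewrite mulr_ge0.
  move: hl1 h1; lra.
have Q0 : 0 <= 1 + Rt + 3 * Dd * h ^+ 2 * l.+2%:R.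
  have : 0 <= 3 * Dd * h ^+ 2 * l.+2%:R by rewrite !mulr_ge0 ?ler0n ?sqr_ge0 // ltW.
  move: Rt0; lra.
have fin : B l.+1 < E * (Rt + 2).
  rewrite /B.
  apply: (le_lt_trans (ler_wpM2l Q0 hX)).
  apply: (le_lt_trans (ler_wpM2l Q0 (ler_wpM2l (ltW E0) hY))).
  move: (3 * Dd * h ^+ 2 * l.+2%:R) hQ Q0 => q hQ Q0.
  have inner : (1 + Rt + q) * (1 + 2 * (C_S * h)) < Rt + 2.
    move: hx2 hx3 Kh hQ Q0 CSh Rt0; move: (K * h) (C_S * h) (Dd * h) => kh x0 y0.
    move=> hx2 hx3 Kh hQ Q0 CSh Rt0.
    have q14 : q < 1 / 4 by lra.
    have : (1 + Rt + q) * (2 * x0) <= (2 + Rt) * (2 * x0).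
      by apply: ler_wpM2r; lra.
    lra.
  rewrite mulrCA; rewrite ltr_pM2l //.
rewrite /eball0 /=; move: hb fin; lra.
Qed.
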